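(* Let $f^*\in L^2(\mathcal D)$ with $\mathbb E_{x\sim\mathcal D}[f^*(x)^2]=1$. Let $f_{\mathrm{teacher}}$ be shrinkage-optimal with respect to $f^*$ and let $f_{\mathrm{student}}$ be any function with $\mathbb E_x[f_{\mathrm{student}}(x)^2]\le\mathbb E_x[f_{\mathrm{teacher}}(x)^2]$. With $\mathcal L_{TE}=\mathbb E_x[(f_{\mathrm{teacher}}-f^* )^2]$ and $\mathcal L_{ST}=\mathbb E_x[(f_{\mathrm{student}}-f^* )^2]$, $$\mathcal L_{ST}\ \ge\ \big(1-\sqrt{1-\mathcal L_{TE}}\big)^2\ \ge\ \frac14\,\mathcal L_{TE}^2 .$$
   Context: $\mathcal D$ is a probability distribution on an input space $\mathcal X$. Shrinkage optimality: given $\hat f,f_{\mathrm{train}}:\mathcal X\to\mathbb R$, $\hat f$ is shrinkage-optimal with respect to $f_{\mathrm{train}}$ if for every $0\le\alpha\le1$, $\mathbb E_x[(\hat f(x)-f_{\mathrm{train}}(x))^2]\le\mathbb E_x[(\alpha\hat f(x)-f_{\mathrm{train}}(x))^2]$. All functions are in $L^2(\mathcal D)$. *)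

(* Defs.v *)
From mathcomp Require Import all_boot all_order all_algebra.
From mathcomp Require Import all_classical all_reals all_analysis.
Set Implicit Arguments. Unset Strict Implicit. Unset Printing Implicit Defensive.
Import Order.TTheory GRing.Theory Num.Theory.
Local Open Scope ring_scope.

Definition inL2 (d : measure_display) (T : measurableType d) (R : realType)
  (P : probability T R) (f : T -> R) : Prop :=
  measurable_fun setT f /\ P.-integrable setT (fun x => ((f x) ^+ 2)%:E).

Definition Ex (d : measure_display) (T : measurableType d) (R : realType)
  (P : probability T R) (f : T -> R) : R := Rintegral P setT f.

Definition shrinkage_optimal (d : measure_display) (T : measurableType d)
  (R : realType) (P : probability T R) (fhat ftrain : T -> R) : Prop :=
  forall alpha : R, 0 <= alpha <= 1 ->
    Ex P (fun x => (fhat x - ftrain x) ^+ 2)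
    <= Ex P (fun x => (alpha * fhat x - ftrain x) ^+ 2).

(* Main.v *)
Require Import Defs.
From mathcomp Require Import all_boot all_order all_algebra.
From mathcomp Require Import all_classical all_reals all_analysis.
From mathcomp Require Import measurable_realfun ring lra.
Import Order.TTheory GRing.Theory Num.Theory.
Local Open Scope ring_scope.

Section S.
Variables (d : measure_display) (T : measurableType d) (R : realType) (P : probability T R).
Let I (f : T -> R) := P.-integrable setT (EFin \o f).

Lemma intZ k f : I f -> I (fun x => k * f x).
Proof.
move=> h; have := integrableZl measurableT k h.
by apply: eq_integrable => // x _ /=; rewrite EFinM.
Qed.

Lemma intD f g : I f -> I g -> I (fun x => f x + g x).
Proof.
move=> hf hg; have := integrableD measurableT hf hg.
by apply: eq_integrable => // x _ /=.
Qed.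

Lemma intM g h : inL2 P g -> inL2 P h -> I (fun x => g x * h x).
Proof.
move=> [mg ig] [mh ih].
apply: (le_integrable measurableT (g := EFin \o (fun x => g x ^+ 2 + h x ^+ 2))).
- by apply/measurable_EFinP; exact: measurable_funM.
- move=> x _ /=; rewrite lee_fin.
  rewrite [X in _ <= X]ger0_norm ?addr_ge0 ?sqr_ge0 // normrM.
  have := sqr_ge0 (`|g x| - `|h x|). rewrite sqrrB !real_normK ?num_real //.
  move=> H; nra.
- exact: intD.
Qed.

Lemma expand g h a b : inL2 P g -> inL2 P h ->
  Ex P (fun x => (a * g x - b * h x) ^+ 2) =
  a ^+ 2 * Ex P (fun x => g x ^+ 2) - 2 * a * b * Ex P (fun x => g x * h x)
  + b ^+ 2 * Ex P (fun x => h x ^+ 2).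
Proof.
move=> Hg Hh.
have Ig : I (fun x => g x ^+ 2) by case: Hg.
have Ih : I (fun x => h x ^+ 2) by case: Hh.
have Igh := intM g h Hg Hh.
rewrite /Ex.
transitivity (\int[P]_(x in setT) ((a ^+ 2 * g x ^+ 2 + (- (2 * a * b)) * (g x * h x)) + b ^+ 2 * h x ^+ 2)).
  by apply: eq_Rintegral => x _; ring.
rewrite RintegralD //; last by apply: intZ.
  rewrite RintegralD //; try by apply: intZ.
  by rewrite !RintegralZl // mulNr.
by apply: intD; apply: intZ.
Qed.
End S.

Theorem theorem4p5 (d : measure_display) (T : measurableType d) (R : realType)
  (P : probability T R) (fstar fteacher fstudent : T -> R) :
  inL2 P fstar -> inL2 P fteacher -> inL2 P fstudent ->
  Ex P (fun x => fstar x ^+ 2) = 1 ->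
  shrinkage_optimal P fteacher fstar ->
  Ex P (fun x => fstudent x ^+ 2) <= Ex P (fun x => fteacher x ^+ 2) ->
  let LTE := Ex P (fun x => (fteacher x - fstar x) ^+ 2) in
  let LST := Ex P (fun x => (fstudent x - fstar x) ^+ 2) in
  (1 - Num.sqrt (1 - LTE)) ^+ 2 <= LST /\
  LTE ^+ 2 / 4 <= (1 - Num.sqrt (1 - LTE)) ^+ 2.
Proof.
move=> Hf Ht Hs Ef1 Hsh Hst LTE LST.
set a := Ex P (fun x => fteacher x ^+ 2).
set b := Ex P (fun x => fteacher x * fstar x).
set s2 := Ex P (fun x => fstudent x ^+ 2).
set c := Ex P (fun x => fstudent x * fstar x).
have Eal : forall al, Ex P (fun x => (al * fteacher x - fstar x) ^+ 2)
    = al ^+ 2 * a - 2 * al * b + 1.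
  move=> al.
  rewrite (_ : (fun x => _) = fun x => (al * fteacher x - 1 * fstar x) ^+ 2);
    last by apply: funext => x; rewrite mul1r.
  by rewrite expand // Ef1 /a /b; ring.
have EL : LTE = a - 2 * b + 1.
  rewrite /LTE (_ : (fun x => _) = fun x => (1 * fteacher x - fstar x) ^+ 2);
    last by apply: funext => x; rewrite mul1r.
  by rewrite Eal; ring.
have ES : LST = s2 - 2 * c + 1.
  rewrite /LST (_ : (fun x => _) = fun x => (1 * fstudent x - 1 * fstar x) ^+ 2);
    last by apply: funext => x; rewrite !mul1r.
  by rewrite expand // Ef1 /s2 /c; ring.
have CS : c ^+ 2 <= s2.
  have : 0 <= Ex P (fun x => (1 * fstudent x - c * fstar x) ^+ 2).
    by apply: Rintegral_ge0 => x _; exact: sqr_ge0.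
  rewrite expand // Ef1 -/s2 -/c => H; nra.
have a0 : 0 <= a by apply: Rintegral_ge0 => x _; exact: sqr_ge0.
have s0 : 0 <= s2 by apply: Rintegral_ge0 => x _; exact: sqr_ge0.
have L0 : 0 <= LTE by apply: Rintegral_ge0 => x _; exact: sqr_ge0.
have H0 := Hsh 0 ltac:(by rewrite lexx ler01).
rewrite Eal -/LTE EL in H0.
have ab : a <= b.
  rewrite leNgt; apply/negP => ba.
  have apos : 0 < a by nra.
  have b0 : 0 <= b by nra.
  have Hal := Hsh (b / a) ltac:(by rewrite divr_ge0 //= ler_pdivrMr // mul1r ltW).
  rewrite Eal -/LTE EL in Hal.
  have : a * (a - 2 * b + 1) <= a * ((b / a) ^+ 2 * a - 2 * (b / a) * b + 1).
    by rewrite ler_pM2l.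
  have -> : a * ((b / a) ^+ 2 * a - 2 * (b / a) * b + 1) = - b ^+ 2 + a.
    by field; rewrite gt_eqF.
  move=> H; nra.
have L1 : LTE <= 1 - a by rewrite EL; lra.
set v := Num.sqrt (1 - LTE).
set u := Num.sqrt s2.
have v0 : 0 <= v by exact: sqrtr_ge0.
have u0 : 0 <= u by exact: sqrtr_ge0.
have vv : v ^+ 2 = 1 - LTE by rewrite sqr_sqrtr // subr_ge0; lra.
have uu : u ^+ 2 = s2 by rewrite sqr_sqrtr.
have uv : u <= v by apply: ler_wsqrtr; move: Hst; rewrite -/a -/s2; lra.
have v1 : v <= 1 by nra.
have cu : c <= u by nra.
split.
  rewrite ES; nra.
nra.
Qed.
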